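(* Let $R$ be a right coherent ring and $M\in R\text{-}\mathbf{Mod}$. Then (1) $\ker(\mathrm{Covdefect})\subseteq\ker(\mathrm{ev}_M)$ if and only if $M$ is flat; (2) $\ker(\mathrm{Covdefect})=\ker(\mathrm{ev}_M)$ if and only if $M$ is fp-faithfully flat.
   Context: $R$ is right coherent if every finitely generated right ideal is finitely presented; then $\mathbf{mod}\text{-}R$ (finitely presented right modules) is abelian. $R\text{-}\mathbf{mod}\text{-}\mathbf{mod}$ is the abelian category of finitely presented additive functors from finitely presented left $R$-modules to $\mathbf{Ab}$ (cokernels of $\operatorname{Hom}(\alpha,-)$), each identified with its extension to all left modules commuting with filtered colimits; $\mathrm{ev}_M(\mathcal G)=\mathcal G(M)$ and $\ker(\mathrm{ev}_M)=\{\mathcal G\mid\mathcal G(M)=0\}$. Every $\mathcal G\in R\text{-}\mathbf{mod}\text{-}\mathbf{mod}$ admits a copresentation, an exact sequence $0\to\mathcal G\to(N\otimes_R-)\xrightarrow{\alpha\otimes-}(N'\otimes_R-)$ with $\alpha:N\to N'$ in $\mathbf{mod}\text{-}R$; the covariant defect is $\mathrm{Covdefect}(\mathcal G):=\ker(\alpha)\cong\mathcal G({}_RR)$ (right module structure: $r$ acts by $\mathcal G$ applied to right multiplication by $r$ on ${}_RR$), and $\ker(\mathrm{Covdefect})$ consists of the $\mathcal G$ with zero covariant defect. $M$ is flat if $-\otimes_RM$ is exact on right modules, and fp-faithfully flat if it is flat and $-\otimes_RM:\mathbf{mod}\text{-}R\to\mathbf{Ab}$ is faithful. *)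

(* Defs.v *)
From HB Require Import structures.
From mathcomp Require Import all_boot all_order all_algebra.
From mathcomp Require Import freeg.
Set Implicit Arguments. Unset Strict Implicit. Unset Printing Implicit Defensive.
Import GRing.Theory.
Local Open Scope ring_scope.

(* Right R-modules   = lmodType R^c  (R^c = converse ring); for x : X and
   r : R, the right action x.r is written  (r : R^c) *: x.
   R viewed as a left module over itself is the regular module R^o. *)

Definition fin_pres (S : pzRingType) (V : lmodType S) : Prop :=
  exists (n : nat) (v : 'I_n -> V),
    (forall x : V, exists c : 'I_n -> S, x = \sum_(i < n) c i *: v i) /\
    exists (m : nat) (w : 'I_m -> 'I_n -> S),
      (forall j, \sum_(i < n) w j i *: v i = 0) /\
      (forall c : 'I_n -> S, \sum_(i < n) c i *: v i = 0 ->
         exists d : 'I_m -> S, forall i, c i = \sum_(j < m) d j * w j i).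

Definition in_right_ideal (R : pzRingType) (n : nat) (a : 'I_n -> R) (x : R) :=
  exists c : 'I_n -> R, x = \sum_(i < n) a i * c i.

Definition fp_right_ideal (R : pzRingType) (n : nat) (a : 'I_n -> R) : Prop :=
  exists (n' : nat) (b : 'I_n' -> R),
    (forall x, in_right_ideal a x <-> in_right_ideal b x) /\
    exists (m : nat) (w : 'I_m -> 'I_n' -> R),
      (forall j, \sum_(i < n') b i * w j i = 0) /\
      (forall c : 'I_n' -> R, \sum_(i < n') b i * c i = 0 ->
         exists d : 'I_m -> R, forall i, c i = \sum_(j < m) w j i * d j).

Definition right_coherent (R : pzRingType) : Prop :=
  forall (n : nat) (a : 'I_n -> R), fp_right_ideal a.

(* Tensor product X (x)_R M of a right module X and a left module M,
   presented as the free abelian group on X * M modulo the subgroup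
   generated by the bilinearity / balancing relations.  An element of
   X (x)_R M is represented by a formal sum s = [:: (x_1,m_1); ...]
   standing for  \sum_k x_k (x) m_k  (every element is of this form, since
   -(x (x) m) = (-x) (x) m). *)
Section Tensor.
Variables (R : pzRingType) (X : lmodType R^c) (M : lmodType R).

Definition tgen (p : X * M) : {freeg (X * M) / int} := << p >>.

Inductive trel : {freeg (X * M) / int} -> Prop :=
  | trel0 : trel 0
  | trelB z1 z2 : trel z1 -> trel z2 -> trel (z1 - z2)
  | trel_addl x x' m :
      trel (tgen (x + x', m) - tgen (x, m) - tgen (x', m))
  | trel_addr x m m' :
      trel (tgen (x, m + m') - tgen (x, m) - tgen (x, m'))
  | trel_bal (r : R) x m :
      trel (tgen ((r : R^c) *: x, m) - tgen (x, r *: m)).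

Definition tsum (s : seq (X * M)) : {freeg (X * M) / int} :=
  \sum_(p <- s) tgen p.

Definition teq (s1 s2 : seq (X * M)) : Prop := trel (tsum s1 - tsum s2).
End Tensor.

Definition tmap (R : pzRingType) (X Y : lmodType R^c) (M : lmodType R)
  (f : X -> Y) (s : seq (X * M)) : seq (Y * M) :=
  [seq (f p.1, p.2) | p <- s].

Definition flat (R : pzRingType) (M : lmodType R) : Prop :=
  forall (X Y Z : lmodType R^c) (f : {linear X -> Y}) (g : {linear Y -> Z}),
    (forall y : Y, g y = 0 <-> exists x : X, f x = y) ->
    forall s : seq (Y * M),
      teq (tmap g s) [::] <-> exists t : seq (X * M), teq (tmap f t) s.

Definition fp_faithful (R : pzRingType) (M : lmodType R) : Prop :=
  forall (N N' : lmodType R^c), fin_pres N -> fin_pres N' ->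
  forall f g : {linear N -> N'},
    (forall s : seq (N * M), teq (tmap f s) (tmap g s)) ->
    forall n : N, f n = g n.

Definition fp_faithfully_flat (R : pzRingType) (M : lmodType R) : Prop :=
  flat M /\ fp_faithful M.

(* Objects of R-mod-mod: G = Coker Hom(alpha, -) for a morphism
   alpha : A -> B of finitely presented left R-modules.  Its (filtered-
   colimit preserving) extension to an arbitrary left module L is
   G(L) = Coker (Hom(B,L) -> Hom(A,L)), since Hom(A,-), Hom(B,-) commute
   with filtered colimits for A, B finitely presented. *)
Record fpfunctor (R : pzRingType) := FPFunctor {
  fpf_dom : lmodType R;
  fpf_cod : lmodType R;
  fpf_dom_fp : fin_pres fpf_dom;
  fpf_cod_fp : fin_pres fpf_cod;
  fpf_map : {linear fpf_dom -> fpf_cod}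
}.

(* G(L) = 0, i.e. G lies in ker(ev_L): Hom(alpha, L) is surjective. *)
Definition ev_zero (R : pzRingType) (G : fpfunctor R) (L : lmodType R) : Prop :=
  forall g : {linear fpf_dom G -> L},
    exists h : {linear fpf_cod G -> L},
      forall a, g a = h (fpf_map G a).

(* Covdefect(G) = 0; Covdefect(G) is isomorphic to G(_R R). *)
Definition covdefect_zero (R : pzRingType) (G : fpfunctor R) : Prop :=
  ev_zero G R^o.

(* Main.v *)
Require Import Defs.
From HB Require Import structures.
From mathcomp Require Import all_boot all_order all_algebra.
From mathcomp Require Import freeg.
From Stdlib Require Import ClassicalEpsilon.
Set Implicit Arguments. Unset Strict Implicit. Unset Printing Implicit Defensive.
Import GRing.Theory.
Local Open Scope ring_scope.

Section TensorAlg.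
Variables (R : pzRingType) (X : lmodType R^c) (M : lmodType R).
Local Notation F := {freeg (X * M) / int}.

Definition teqv (a b : F) := trel (a - b).

Lemma trelN (a : F) : trel a -> trel (- a).
Proof. by move=> h; rewrite -sub0r; apply: trelB => //; apply: trel0. Qed.

Lemma trelD (a b : F) : trel a -> trel b -> trel (a + b).
Proof. by move=> ha hb; rewrite -[b]opprK; apply: trelB => //; apply: trelN. Qed.

Lemma teqv_refl a : teqv a a.
Proof. by rewrite /teqv subrr; apply: trel0. Qed.

Lemma teqv_sym a b : teqv a b -> teqv b a.
Proof. by rewrite /teqv => h; rewrite -opprB; apply: trelN. Qed.

Lemma teqv_trans a b c : teqv a b -> teqv b c -> teqv a c.
Proof.
by rewrite /teqv => h1 h2; have := trelD h1 h2; rewrite addrA subrK.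
Qed.

Lemma teqvD a b c d : teqv a b -> teqv c d -> teqv (a + c) (b + d).
Proof.
rewrite /teqv => h1 h2; have := trelD h1 h2.
by rewrite opprD addrACA.
Qed.

Lemma teqvN a b : teqv a b -> teqv (- a) (- b).
Proof. by rewrite /teqv => h; rewrite -opprD; apply: trelN. Qed.

Lemma teqvB a b c d : teqv a b -> teqv c d -> teqv (a - c) (b - d).
Proof. by move=> h1 h2; apply: teqvD => //; apply: teqvN. Qed.

Lemma teqv_sum (I : Type) (r : seq I) (P : pred I) (f g : I -> F) :
  (forall i, P i -> teqv (f i) (g i)) ->
  teqv (\sum_(i <- r | P i) f i) (\sum_(i <- r | P i) g i).
Proof.
move=> h; elim: r => [|i r IH]; first by rewrite !big_nil; apply: teqv_refl.
rewrite !big_cons; case: ifP => Pi //; exact: teqvD (h i Pi) IH.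
Qed.

Lemma teqv0 a : teqv a 0 <-> trel a.
Proof. by rewrite /teqv subr0. Qed.

Lemma trel_teqv a b : teqv a b -> trel b -> trel a.
Proof. by move=> h hb; have := trelD h hb; rewrite subrK. Qed.

Lemma teqvE a b : a = b -> teqv a b.
Proof. by move=> ->; apply: teqv_refl. Qed.

Lemma tgenDl x x' m : teqv (tgen (x + x', m)) (tgen (x, m) + tgen (x', m)).
Proof. by rewrite /teqv opprD addrA; apply: trel_addl. Qed.

Lemma tgenDr x m m' : teqv (tgen (x, m + m')) (tgen (x, m) + tgen (x, m')).
Proof. by rewrite /teqv opprD addrA; apply: trel_addr. Qed.

Lemma tgen_bal (r : R) x m : teqv (tgen ((r : R^c) *: x, m)) (tgen (x, r *: m)).
Proof. rewrite /teqv; exact: trel_bal. Qed.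

Lemma tgen0l m : teqv (tgen (0, m)) 0.
Proof.
have := tgenDl 0 0 m; rewrite addr0 /teqv => h.
have := trelN h; rewrite opprB addrK => h'.
by rewrite /teqv subr0.
Qed.

Lemma tgen0r x : teqv (tgen (x, 0)) 0.
Proof.
have := tgenDr x 0 0; rewrite addr0 /teqv => h.
have := trelN h; rewrite opprB addrK => h'.
by rewrite /teqv subr0.
Qed.

Lemma tgen_suml (I : Type) (r : seq I) (f : I -> X) m :
  teqv (tgen (\sum_(i <- r) f i, m)) (\sum_(i <- r) tgen (f i, m)).
Proof.
elim: r => [|i r IH]; first by rewrite !big_nil; apply: tgen0l.
rewrite !big_cons; apply: teqv_trans (tgenDl _ _ _) _.
exact: teqvD (teqv_refl _) IH.
Qed.

Lemma tgen_sumr (I : Type) (r : seq I) (f : I -> M) x :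
  teqv (tgen (x, \sum_(i <- r) f i)) (\sum_(i <- r) tgen (x, f i)).
Proof.
elim: r => [|i r IH]; first by rewrite !big_nil; apply: tgen0r.
rewrite !big_cons; apply: teqv_trans (tgenDr _ _ _) _.
exact: teqvD (teqv_refl _) IH.
Qed.

Lemma tBIL (I J : Type) (rI : seq I) (rJ : seq J) (e : I -> X) (a : I -> J -> R)
   (nu : J -> M) :
  teqv (\sum_(i <- rI) tgen (e i, \sum_(j <- rJ) a i j *: nu j))
       (\sum_(j <- rJ) tgen (\sum_(i <- rI) (a i j : R^c) *: e i, nu j)).
Proof.
apply: (@teqv_trans _ (\sum_(i <- rI) \sum_(j <- rJ) tgen (e i, a i j *: nu j))).
  by apply: teqv_sum => i _; apply: tgen_sumr.
rewrite exchange_big /=.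
apply: teqv_sum => j _; apply: teqv_sym.
apply: teqv_trans (tgen_suml _ _ _) _.
apply: teqv_sum => i _; exact: tgen_bal.
Qed.

Lemma tsum_cons (p : X * M) s : tsum (p :: s) = tgen p + tsum s.
Proof. by rewrite /tsum big_cons. Qed.

Lemma tsum_nil : tsum (X:=X) (M:=M) [::] = 0.
Proof. by rewrite /tsum big_nil. Qed.

Lemma tsumE (s : seq (X * M)) : tsum s = \sum_(p <- s) tgen p.
Proof. by []. Qed.

Definition tev (V : zmodType) (f : X * M -> V) (u : F) : V :=
  @fglift int (zmodule V) (X * M)%type f u.

Variables (V : zmodType) (f : X * M -> V).

Lemma tevB : {morph tev f : u v / u - v}.
Proof. exact: (@lift_is_additive int (X * M)%type (zmodule V) f). Qed.

Lemma tev0 : tev f 0 = 0.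
Proof. by have := tevB 0 0; rewrite !subrr. Qed.

Lemma tevN u : tev f (- u) = - tev f u.
Proof. by have := tevB 0 u; rewrite tev0 !sub0r. Qed.

Lemma tevD u v : tev f (u + v) = tev f u + tev f v.
Proof. by have := tevB u (- v); rewrite !opprK tevN opprK. Qed.

Lemma tev_sum (I : Type) (r : seq I) (g : I -> F) :
  tev f (\sum_(i <- r) g i) = \sum_(i <- r) tev f (g i).
Proof.
elim: r => [|i r IH]; first by rewrite !big_nil tev0.
by rewrite !big_cons tevD IH.
Qed.

Lemma tevU p : tev f (tgen p) = f p.
Proof. by rewrite /tev /tgen liftU /= scalezrE mulr1z. Qed.

Lemma tev_tsum s : tev f (tsum s) = \sum_(p <- s) f p.
Proof. by rewrite /tsum tev_sum; apply: eq_bigr => p _; rewrite tevU. Qed.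

Hypothesis fDl : forall x x' m, f (x + x', m) = f (x, m) + f (x', m).
Hypothesis fDr : forall x m m', f (x, m + m') = f (x, m) + f (x, m').
Hypothesis fbal : forall (r : R) x m, f ((r : R^c) *: x, m) = f (x, r *: m).

Lemma tev_trel u : trel u -> tev f u = 0.
Proof.
elim=> [|z1 z2 _ h1 _ h2|x x' m|x m m'|r x m]; first exact: tev0.
- by rewrite tevB h1 h2 subrr.
- by rewrite !tevB !tevU fDl -addrA -opprD subrr.
- by rewrite !tevB !tevU fDr -addrA -opprD subrr.
- by rewrite !tevB !tevU fbal subrr.
Qed.

Lemma tev_teqv u v : teqv u v -> tev f u = tev f v.
Proof. by move=> /tev_trel; rewrite tevB => /eqP; rewrite subr_eq0 => /eqP. Qed.

End TensorAlg.

Arguments teqv {R X M}.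

Section TMap.
Variables (R : pzRingType) (X Y : lmodType R^c) (M : lmodType R).
Variable (h : {linear X -> Y}).

Definition tpush (u : {freeg (X * M) / int}) : {freeg (Y * M) / int} :=
  tev (fun p => tgen (h p.1, p.2)) u.

Lemma tpush_trel u : trel u -> trel (tpush u).
Proof.
elim=> [|z1 z2 _ h1 _ h2|x x' m|x m m'|r x m].
- by rewrite /tpush tev0; apply: trel0.
- by rewrite /tpush tevB; apply: trelB.
- by rewrite /tpush !tevB !tevU /= linearD; apply: trel_addl.
- by rewrite /tpush !tevB !tevU /=; apply: trel_addr.
- by rewrite /tpush !tevB !tevU /= linearZ; apply: trel_bal.
Qed.

Lemma tpush_tsum (s : seq (X * M)) : tpush (tsum s) = tsum (tmap h s).
Proof.
rewrite /tpush tev_tsum /tmap /tsum big_map; apply: eq_bigr => p _; by [].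
Qed.

Lemma teq_tmap (s1 s2 : seq (X * M)) : teq s1 s2 -> teq (tmap h s1) (tmap h s2).
Proof.
rewrite /teq -!tpush_tsum => /tpush_trel.
by rewrite /tpush tevB.
Qed.
End TMap.

Section Coh.
Variable R : pzRingType.

Definition rker (m n : nat) (w : 'I_m -> 'I_n -> R) (c : 'I_n -> R) :=
  forall j, \sum_(i < n) w j i * c i = 0.

Definition rspanI (n : nat) (I : finType) (x : I -> 'I_n -> R) (c : 'I_n -> R) :=
  exists d : I -> R, forall i, c i = \sum_k x k i * d k.

Definition fgkerI (m n : nat) (w : 'I_m -> 'I_n -> R) :=
  exists (I : finType) (x : I -> 'I_n -> R),
    (forall k, rker w (x k)) /\ (forall c, rker w c -> rspanI x c).

Lemma sum_deltal (n : nat) (i : 'I_n) (f : 'I_n -> R) :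
  \sum_i0 (if i == i0 then 1 else 0) * f i0 = f i.
Proof.
rewrite (bigD1 i) //= eqxx mul1r big1 ?addr0 // => i0.
by rewrite eq_sym => /negPf ->; rewrite mul0r.
Qed.

Lemma sum_deltar (n : nat) (i : 'I_n) (f : 'I_n -> R) :
  \sum_i0 f i0 * (if i0 == i then 1 else 0) = f i.
Proof.
rewrite (bigD1 i) //= eqxx mulr1 big1 ?addr0 // => i0.
by move=> /negPf ->; rewrite mulr0.
Qed.

Lemma fgker_row (n : nat) (a : 'I_n -> R) : fp_right_ideal a ->
  fgkerI (fun _ : 'I_1 => a).
Proof.
move=> [n' [b [hab [m' [w' [hw' hcw']]]]]].
have hp : forall i, exists pi : 'I_n' -> R, a i = \sum_i' b i' * pi i'.
  move=> i; have [h _] := hab (a i); apply: h.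
  exists (fun i0 => if i0 == i then 1 else 0).
  rewrite (bigD1 i) //= eqxx mulr1 big1 ?addr0 // => i0 /negPf ->; exact: mulr0.
have hq : forall i', exists qi : 'I_n -> R, b i' = \sum_i a i * qi i.
  move=> i'; have [_ h] := hab (b i'); apply: h.
  exists (fun i0 => if i0 == i' then 1 else 0).
  rewrite (bigD1 i') //= eqxx mulr1 big1 ?addr0 // => i0 /negPf ->; exact: mulr0.
have [p hpE] : exists p : 'I_n' -> 'I_n -> R, forall i, a i = \sum_i' b i' * p i' i.
  have [f hf] := fin_all_exists hp.
  by exists (fun i' i => f i i'); move=> i; rewrite hf.
have [q hqE] : exists q : 'I_n -> 'I_n' -> R, forall i', b i' = \sum_i a i * q i i'.
  have [f hf] := fin_all_exists hq.
  by exists (fun i i' => f i' i); move=> i'; rewrite hf.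
pose x (k : ('I_m' + 'I_n)%type) : 'I_n -> R :=
  match k with
  | inl j => fun i => \sum_i' q i i' * w' j i'
  | inr i0 => fun i => (if i == i0 then 1 else 0) - \sum_i' q i i' * p i' i0
  end.
exists ('I_m' + 'I_n)%type, x; split.
- move=> [j|i0] _ /=.
  + under eq_bigr do rewrite mulr_sumr.
    rewrite exchange_big /= -[RHS](hw' j); apply: eq_bigr => i' _.
    by rewrite hqE mulr_suml; apply: eq_bigr => i _; rewrite mulrA.
  + under eq_bigr do rewrite mulrBr mulr_sumr.
    rewrite sumrB (bigD1 i0) //= eqxx mulr1 big1 ?addr0; last first.
      by move=> i /negPf ->; rewrite mulr0.
    rewrite exchange_big /= hpE; apply/eqP; rewrite subr_eq0; apply/eqP.
    apply: eq_bigr => i' _; rewrite hqE !mulr_suml; apply: eq_bigr => i _.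
    by rewrite mulrA.
- move=> c hc; have hc0 := hc ord0.
  have hpc : \sum_i' b i' * (\sum_i p i' i * c i) = 0.
    rewrite -[RHS]hc0; under eq_bigr do rewrite mulr_sumr.
    rewrite exchange_big /=; apply: eq_bigr => i _.
    by rewrite hpE mulr_suml; apply: eq_bigr => i' _; rewrite mulrA.
  have [d hd] := hcw' _ hpc.
  exists (fun k => match k with inl j => d j | inr i0 => c i0 end) => i.
  rewrite big_sumType /=.
  under [X in _ = X + _]eq_bigr do rewrite mulr_suml.
  under [X in _ = _ + X]eq_bigr do rewrite mulrBl.
  rewrite sumrB sum_deltal addrCA.
  have -> : \sum_(j < m') \sum_(i' < n') q i i' * w' j i' * d j
          = \sum_(i0 < n) (\sum_(i' < n') q i i' * p i' i0) * c i0.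
    rewrite exchange_big /=.
    transitivity (\sum_(i' < n') q i i' * (\sum_(j < m') w' j i' * d j)).
      by apply: eq_bigr => i' _; rewrite mulr_sumr; apply: eq_bigr => j _; rewrite mulrA.
    transitivity (\sum_(i' < n') q i i' * (\sum_(i0 < n) p i' i0 * c i0)).
      by apply: eq_bigr => i' _; rewrite hd.
    under [RHS]eq_bigr do rewrite mulr_suml.
    rewrite exchange_big /=; apply: eq_bigr => i' _.
    by rewrite mulr_sumr; apply: eq_bigr => i0 _; rewrite mulrA.
  by rewrite subrr addr0.
Qed.

Definition fgker (m n : nat) (w : 'I_m -> 'I_n -> R) :=
  exists (K : nat) (x : 'I_K -> 'I_n -> R),
    (forall k, rker w (x k)) /\
    (forall c, rker w c -> exists d : 'I_K -> R, forall i, c i = \sum_k x k i * d k).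

Lemma fgkerI_ord m n (w : 'I_m -> 'I_n -> R) : fgkerI w -> fgker w.
Proof.
move=> [I [x [h1 h2]]]; exists #|I|, (fun k => x (enum_val k)); split.
  by move=> k; apply: h1.
move=> c /h2 [d hd]; exists (fun k => d (enum_val k)) => i.
rewrite hd; rewrite -(big_enum_val (A := I) (fun k => x k i * d k)).
by apply: eq_bigl => k; rewrite inE.
Qed.

Lemma fgker_all (hR : right_coherent R) m n (w : 'I_m -> 'I_n -> R) : fgker w.
Proof.
elim: m w => [|m IH] w.
  exists n, (fun k i => if i == k then 1 else 0); split; first by move=> k [].
  by move=> c _; exists c => i; rewrite sum_deltal.
pose w' := fun j : 'I_m => w (widen_ord (leqnSn m) j).
pose r := w ord_max.
have [K1 [u [hu1 hu2]]] := IH w'.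
pose a := fun l : 'I_K1 => \sum_i r i * u l i.
have [I2 [z [hz1 hz2]]] := fgker_row (hR _ a).
apply: fgkerI_ord.
exists I2, (fun t i => \sum_l u l i * z t l); split.
- move=> t j; case: (fintype.unliftP ord_max j) => [j' ->|->].
  + have -> : fintype.lift ord_max j' = widen_ord (leqnSn m) j'.
      by apply: val_inj; rewrite /= /bump leqNgt ltn_ord.
    under eq_bigr do rewrite mulr_sumr.
    rewrite exchange_big /=; apply: big1 => l _.
    transitivity ((\sum_i w' j' i * u l i) * z t l); last by rewrite hu1 mul0r.
    rewrite mulr_suml.
    by apply: eq_bigr => i _; rewrite mulrA.
  + transitivity (\sum_l a l * z t l); last exact: hz1 t ord0.
    under eq_bigr do rewrite mulr_sumr.
    rewrite exchange_big /=; apply: eq_bigr => l _; rewrite mulr_suml.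
    by apply: eq_bigr => i _; rewrite mulrA.
- move=> c hc.
  have hc' : rker w' c by move=> j; apply: hc.
  have [d hd] := hu2 c hc'.
  have hda : rker (fun _ : 'I_1 => a) d.
    move=> _; transitivity (\sum_i w ord_max i * c i); last exact: hc ord_max.
    rewrite /a.
    under eq_bigr do rewrite mulr_suml.
    rewrite exchange_big /=; apply: eq_bigr => i _; rewrite hd mulr_sumr.
    by apply: eq_bigr => l _; rewrite mulrA.
  have [e he] := hz2 d hda.
  exists e => i; rewrite hd.
  transitivity (\sum_l u l i * \sum_t z t l * e t).
    by apply: eq_bigr => l _; rewrite he.
  under eq_bigr do rewrite mulr_sumr.
  rewrite exchange_big /=; apply: eq_bigr => t _; rewrite mulr_suml.
  by apply: eq_bigr => l _; rewrite mulrA.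
Qed.
End Coh.

Definition mkfun (S : pzRingType) (U V : lmodType S) (f : U -> V)
  (fL : linear f) : U -> V := f.
HB.instance Definition _ (S : pzRingType) (U V : lmodType S) (f : U -> V)
  (fL : linear f) := GRing.isLinear.Build S U V *:%R (@mkfun S U V f fL) fL.
Definition mklin (S : pzRingType) (U V : lmodType S) (f : U -> V)
  (fL : linear f) : {linear U -> V} := @mkfun S U V f fL.
Lemma mklinE (S : pzRingType) (U V : lmodType S) (f : U -> V)
  (fL : linear f) x : mklin fL x = f x.
Proof. by []. Qed.

Definition asb (P : Prop) : bool :=
  if excluded_middle_informative P then true else false.
Lemma asbP (P : Prop) : reflect P (asb P).
Proof. by rewrite /asb; case: excluded_middle_informative => h; constructor. Qed.

Section Quot.
Variables (S : pzRingType) (n m : nat) (W : 'I_m -> 'rV[S]_n).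

Definition qrel (c d : 'rV[S]_n) := exists e : 'I_m -> S, c - d = \sum_j e j *: W j.

Lemma qrel_refl c : qrel c c.
Proof. by exists (fun _ => 0); rewrite subrr big1 // => j _; rewrite scale0r. Qed.

Lemma qrel_sym c d : qrel c d -> qrel d c.
Proof.
move=> [e he]; exists (fun j => - e j); rewrite -opprB he -sumrN.
by apply: eq_bigr => j _; rewrite scaleNr.
Qed.

Lemma qrel_trans c d f : qrel c d -> qrel d f -> qrel c f.
Proof.
move=> [e he] [e' he']; exists (fun j => e j + e' j).
rewrite -[c](subrK d) -addrA he he' -big_split /=.
by apply: eq_bigr => j _; rewrite scalerDl.
Qed.

Lemma qrelD c c' d d' : qrel c c' -> qrel d d' -> qrel (c + d) (c' + d').
Proof.
move=> [e he] [e' he']; exists (fun j => e j + e' j).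
rewrite opprD addrACA he he' -big_split /=.
by apply: eq_bigr => j _; rewrite scalerDl.
Qed.

Lemma qrelN c c' : qrel c c' -> qrel (- c) (- c').
Proof.
move=> [e he]; exists (fun j => - e j); rewrite -opprD he -sumrN.
by apply: eq_bigr => j _; rewrite scaleNr.
Qed.

Lemma qrelZ a c c' : qrel c c' -> qrel (a *: c) (a *: c').
Proof.
move=> [e he]; exists (fun j => a * e j); rewrite -scalerBr he scaler_sumr.
by apply: eq_bigr => j _; rewrite scalerA.
Qed.

Lemma qex c : exists d, asb (qrel c d).
Proof. by exists c; apply/asbP; apply: qrel_refl. Qed.

Definition qcan c := xchoose (qex c).

Lemma qcanP c : qrel c (qcan c).
Proof. exact/asbP/(xchooseP (qex c)). Qed.

Lemma qcan_eq c d : qrel c d -> qcan c = qcan d.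
Proof.
move=> h; apply: eq_xchoose => x; apply/asbP/asbP => h'.
  exact: qrel_trans (qrel_sym h) h'.
exact: qrel_trans h h'.
Qed.

Lemma qcan_id c : qcan (qcan c) = qcan c.
Proof. by apply: qcan_eq; apply: qrel_sym; apply: qcanP. Qed.

Definition qtype := {c : 'rV[S]_n | qcan c == c}.

Definition cls c : qtype := exist _ (qcan c) (introT eqP (qcan_id c)).

Lemma clsK (x : qtype) : cls (sval x) = x.
Proof. by case: x => c hc; apply: eq_sig_hprop => [z|]; [exact: eq_irrelevance|exact/eqP]. Qed.

Lemma cls_eq c d : cls c = cls d <-> qrel c d.
Proof.
split=> [h|h]; last by apply: eq_sig_hprop => [z|]; [exact: eq_irrelevance|exact: qcan_eq].
have: qcan c = qcan d by have := f_equal (@sval _ _) h.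
move=> e; apply: qrel_trans (qcanP c) _; rewrite e; exact/qrel_sym/qcanP.
Qed.

Lemma cls_rel c : qrel (sval (cls c)) c.
Proof. exact/qrel_sym/qcanP. Qed.

Definition qadd (x y : qtype) := cls (sval x + sval y).
Definition qopp (x : qtype) := cls (- sval x).
Definition qzero := cls 0.
Definition qscale (a : S) (x : qtype) := cls (a *: sval x).

Lemma qaddE c d : qadd (cls c) (cls d) = cls (c + d).
Proof. by apply/cls_eq; apply: qrelD; apply: cls_rel. Qed.
Lemma qoppE c : qopp (cls c) = cls (- c).
Proof. by apply/cls_eq; apply: qrelN; apply: cls_rel. Qed.
Lemma qscaleE a c : qscale a (cls c) = cls (a *: c).
Proof. by apply/cls_eq; apply: qrelZ; apply: cls_rel. Qed.

Lemma qaddA : associative qadd.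
Proof. by move=> x y z; rewrite -[x]clsK -[y]clsK -[z]clsK !qaddE addrA. Qed.
Lemma qaddC : commutative qadd.
Proof. by move=> x y; rewrite -[x]clsK -[y]clsK !qaddE addrC. Qed.
Lemma qadd0 : left_id qzero qadd.
Proof. by move=> x; rewrite -[x]clsK /qzero qaddE add0r. Qed.
Lemma qaddN : left_inverse qzero qopp qadd.
Proof. by move=> x; rewrite -[x]clsK qoppE qaddE addNr. Qed.
Lemma qscaleA a b x : qscale a (qscale b x) = qscale (a * b) x.
Proof. by rewrite -[x]clsK !qscaleE scalerA. Qed.
Lemma qscale1 : left_id 1 qscale.
Proof. by move=> x; rewrite -[x]clsK qscaleE scale1r. Qed.
Lemma qscaleDr : right_distributive qscale qadd.
Proof. by move=> a x y; rewrite -[x]clsK -[y]clsK qaddE !qscaleE qaddE scalerDr. Qed.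
Lemma qscaleDl x : {morph qscale^~ x : a b / a + b >-> qadd a b}.
Proof. by move=> a b; rewrite -[x]clsK !qscaleE qaddE scalerDl. Qed.
End Quot.

HB.instance Definition _ (S : pzRingType) (n m : nat) (W : 'I_m -> 'rV[S]_n) :=
  Choice.on (qtype W).
HB.instance Definition _ (S : pzRingType) (n m : nat) (W : 'I_m -> 'rV[S]_n) :=
  GRing.isZmodule.Build (qtype W) (@qaddA S n m W) (@qaddC S n m W)
    (@qadd0 S n m W) (@qaddN S n m W).
HB.instance Definition _ (S : pzRingType) (n m : nat) (W : 'I_m -> 'rV[S]_n) :=
  GRing.Zmodule_isLmodule.Build S (qtype W) (@qscaleA S n m W) (@qscale1 S n m W)
    (@qscaleDr S n m W) (@qscaleDl S n m W).

Section QuotTheory.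
Variables (S : pzRingType) (n m : nat) (W : 'I_m -> 'rV[S]_n).
Local Notation Q := (qtype W).

Lemma clsD c d : cls W (c + d) = cls W c + cls W d :> Q.
Proof. by rewrite -qaddE. Qed.
Lemma clsZ a c : cls W (a *: c) = a *: cls W c :> Q.
Proof. by rewrite -qscaleE. Qed.
Lemma cls0 : cls W 0 = 0 :> Q.
Proof. by []. Qed.
Lemma cls_sum (I : Type) (r : seq I) (f : I -> 'rV[S]_n) :
  cls W (\sum_(i <- r) f i) = \sum_(i <- r) cls W (f i) :> Q.
Proof.
elim: r => [|i r IH]; first by rewrite !big_nil.
by rewrite !big_cons clsD IH.
Qed.
Lemma cls_eq0 c : cls W c = 0 :> Q <-> qrel W c 0.
Proof. by rewrite -cls0 cls_eq. Qed.
Lemma clsK' (x : Q) : cls W (sval x) = x.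
Proof. exact: clsK. Qed.
End QuotTheory.

Section FP.
Variable S : pzRingType.

Lemma deltaE n (k j : 'I_n) : (delta_mx 0 k : 'rV[S]_n) 0 j = (j == k)%:R.
Proof. by rewrite mxE eqxx. Qed.

Lemma sum_nat_deltal n (k : 'I_n) (f : 'I_n -> S) :
  \sum_j (j == k)%:R * f j = f k.
Proof.
rewrite (bigD1 k) //= eqxx mul1r big1 ?addr0 // => j /negPf ->; exact: mul0r.
Qed.

Lemma sum_nat_deltar n (k : 'I_n) (f : 'I_n -> S) :
  \sum_j f j * (j == k)%:R = f k.
Proof.
rewrite (bigD1 k) //= eqxx mulr1 big1 ?addr0 // => j /negPf ->; exact: mulr0.
Qed.

Lemma row_sumE n (c : 'I_n -> S) (j : 'I_n) :
  (\sum_i c i *: (delta_mx 0 i : 'rV[S]_n)) 0 j = c j.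
Proof.
rewrite summxE; under eq_bigr do rewrite mxE deltaE eq_sym.
exact: sum_nat_deltar.
Qed.

Lemma fin_pres_row n : fin_pres [the lmodType S of 'rV[S]_n].
Proof.
exists n, (fun i => delta_mx 0 i); split.
  by move=> x; exists (fun i => x 0 i); exact: row_sum_delta.
exists 0, (fun _ _ => 0).
split=> [[] //|c hc]; exists (fun j => 0) => i; rewrite big_ord0.
by have := row_sumE c i; rewrite hc mxE.
Qed.

Lemma fin_pres_quot n m (W : 'I_m -> 'rV[S]_n) : fin_pres (qtype W).
Proof.
exists n, (fun i => cls W (delta_mx 0 i)); split.
  move=> x; exists (fun i => sval x 0 i).
  rewrite -[LHS]clsK' [X in cls W X]row_sum_delta cls_sum.
  by apply: eq_bigr => i _; rewrite clsZ.
exists m, (fun j i => W j 0 i); split.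
  move=> j; under eq_bigr do rewrite -clsZ; rewrite -cls_sum -row_sum_delta.
  apply/cls_eq0; exists (fun j' => (j' == j)%:R).
  rewrite subr0 (bigD1 j) //= eqxx scale1r big1 ?addr0 // => j' /negPf ->.
  by rewrite scale0r.
move=> c; under eq_bigr do rewrite -clsZ; rewrite -cls_sum => /cls_eq0 [e he].
exists e => i; rewrite -(row_sumE c i) -(subr0 (\sum_i _ *: _)) he summxE.
by apply: eq_bigr => j _; rewrite mxE.
Qed.

Lemma quot_span n m (W : 'I_m -> 'rV[S]_n) (x : qtype W) :
  x = \sum_i sval x 0 i *: cls W (delta_mx 0 i).
Proof.
rewrite -[LHS]clsK' [X in cls W X]row_sum_delta cls_sum.
by apply: eq_bigr => i _; rewrite clsZ.
Qed.

Lemma quot_rel n m (W : 'I_m -> 'rV[S]_n) j :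
  \sum_i W j 0 i *: cls W (delta_mx 0 i) = 0.
Proof.
under eq_bigr do rewrite -clsZ; rewrite -cls_sum -row_sum_delta.
apply/cls_eq0; exists (fun j' => (j' == j)%:R).
rewrite subr0 (bigD1 j) //= eqxx scale1r big1 ?addr0 // => j' /negPf ->.
by rewrite scale0r.
Qed.

Lemma quot_comp n m (W : 'I_m -> 'rV[S]_n) (c : 'I_n -> S) :
  \sum_i c i *: cls W (delta_mx 0 i) = 0 ->
  exists d : 'I_m -> S, forall i, c i = \sum_j d j * W j 0 i.
Proof.
under eq_bigr do rewrite -clsZ; rewrite -cls_sum => /cls_eq0 [e he].
exists e => i; rewrite -(row_sumE c i) -(subr0 (\sum_i _ *: _)) he summxE.
by apply: eq_bigr => j _; rewrite mxE.
Qed.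

Lemma row_comp n (c : 'I_n -> S) :
  \sum_i c i *: (delta_mx 0 i : 'rV[S]_n) = 0 ->
  exists d : 'I_0 -> S, forall i, c i = \sum_j d j * (fun _ _ => 0) j i.
Proof.
move=> hc; exists (fun j => 0) => i; rewrite big_ord0.
by have := row_sumE c i; rewrite hc mxE.
Qed.

Variables (V U : lmodType S) (n m : nat) (v : 'I_n -> V) (w : 'I_m -> 'I_n -> S).
Hypothesis hspan : forall x : V, exists c : 'I_n -> S, x = \sum_i c i *: v i.
Hypothesis hcomp : forall c : 'I_n -> S, \sum_i c i *: v i = 0 ->
  exists d : 'I_m -> S, forall i, c i = \sum_j d j * w j i.

Lemma sum_deltaZ (T : lmodType S) (f : 'I_n -> T) (i : 'I_n) :
  \sum_i' (i' == i)%:R *: f i' = f i.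
Proof.
rewrite (bigD1 i) //= eqxx scale1r big1 ?addr0 // => i' /negPf ->.
exact: scale0r.
Qed.

Lemma fp_ext (u : 'I_n -> U) : (forall j, \sum_i w j i *: u i = 0) ->
  exists F : {linear V -> U}, (forall c, F (\sum_i c i *: v i) = \sum_i c i *: u i)
    /\ (forall i, F (v i) = u i).
Proof.
move=> hu.
have wd : forall c c', \sum_i c i *: v i = \sum_i c' i *: v i ->
    \sum_i c i *: u i = \sum_i c' i *: u i.
  move=> c c' e; apply/eqP; rewrite -subr_eq0 -sumrB.
  have : \sum_i (c i - c' i) *: v i = 0.
    by under eq_bigr do rewrite scalerBl; rewrite sumrB e subrr.
  move=> /hcomp [d hd]; apply/eqP.
  transitivity (\sum_i (c i - c' i) *: u i).
    by apply: eq_bigr => i _; rewrite scalerBl.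
  under eq_bigr do rewrite hd scaler_suml.
  rewrite exchange_big /=; apply: big1 => j _.
  by under eq_bigr do rewrite -scalerA; rewrite -scaler_sumr hu scaler0.
pose coef x := proj1_sig (constructive_indefinite_description _ (hspan x)).
have coefP : forall x, x = \sum_i coef x i *: v i.
  by move=> x; rewrite /coef; case: constructive_indefinite_description.
pose f x := \sum_i coef x i *: u i.
have fE : forall c, f (\sum_i c i *: v i) = \sum_i c i *: u i.
  by move=> c; apply: wd; rewrite -coefP.
have fL : linear f.
  move=> a x y; rewrite {1}(coefP x) {1}(coefP y).
  have -> : a *: (\sum_i coef x i *: v i) + \sum_i coef y i *: v i
      = \sum_i (a * coef x i + coef y i) *: v i.
    rewrite scaler_sumr -big_split /=; apply: eq_bigr => i _.
    by rewrite scalerDl scalerA.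
  rewrite fE /f scaler_sumr -big_split /=; apply: eq_bigr => i _.
  by rewrite scalerDl scalerA.
exists (mklin fL); split=> [c|i]; first by rewrite mklinE fE.
by rewrite mklinE -(sum_deltaZ v i) fE sum_deltaZ.
Qed.

Lemma fp_agree (F G : {linear V -> U}) : (forall i, F (v i) = G (v i)) ->
  forall x, F x = G x.
Proof.
move=> h x; have [c ->] := hspan x; rewrite !linear_sum.
by apply: eq_bigr => i _; rewrite !linearZ h.
Qed.
End FP.

Definition eqcrit (R : pzRingType) (M : lmodType R) :=
  forall (n m : nat) (w : 'I_m -> 'I_n -> R) (mu : 'I_n -> M),
    (forall j, \sum_i w j i *: mu i = 0) ->
    exists (K : nat) (x : 'I_K -> 'I_n -> R) (nu : 'I_K -> M),
      (forall k, rker w (x k)) /\ (forall i, mu i = \sum_k x k i *: nu k).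

Section RowMaps.
Variable R : pzRingType.

Lemma mulcE (a b : R) : (a : R^c) * (b : R^c) = (b : R) * (a : R).
Proof. by []. Qed.

Lemma scalecE n (a : R^c) (y : 'rV[R^c]_n) i : (a *: y) 0 i = (y 0 i : R) * (a : R).
Proof. by rewrite mxE. Qed.

Definition rmapf (m n : nat) (w : 'I_m -> 'I_n -> R) (y : 'rV[R^c]_n) : 'rV[R^c]_m :=
  \row_j \sum_i (w j i : R) * (y 0 i : R).

Lemma rmapf_lin m n (w : 'I_m -> 'I_n -> R) : linear (rmapf w).
Proof.
move=> a y y'; apply/rowP => j; rewrite !mxE.
rewrite mulcE mulr_suml -big_split /=; apply: eq_bigr => i _.
by rewrite !mxE mulrDr mulrA.
Qed.

Definition rmap m n (w : 'I_m -> 'I_n -> R) := mklin (rmapf_lin w).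

Lemma rmapE m n (w : 'I_m -> 'I_n -> R) y j :
  rmap w y 0 j = \sum_i (w j i : R) * (y 0 i : R).
Proof. by rewrite /rmap mklinE /rmapf mxE. Qed.
End RowMaps.

Section FlatEq.
Variables (R : pzRingType) (M : lmodType R).

Lemma flat_eqcrit : right_coherent R -> flat M -> eqcrit M.
Proof.
move=> hR hflat n m w mu hmu.
have [K [x [hx1 hx2]]] := fgker_all hR w.
pose xt : 'I_n -> 'I_K -> R := fun i k => x k i.
pose g := rmap w. pose f := rmap xt.
have exact_gf : forall y : 'rV[R^c]_n, g y = 0 <-> exists d, f d = y.
  move=> y; split.
    move=> hy; have : rker w (fun i => y 0 i).
      by move=> j; have := congr1 (fun z : 'rV[R^c]_m => z 0 j) hy; rewrite rmapE mxE.
    move=> /hx2 [e he]; exists (\row_k (e k : R^c)); apply/rowP => i.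
    by rewrite rmapE he; apply: eq_bigr => k _; rewrite mxE.
  move=> [d <-]; apply/rowP => j; rewrite rmapE mxE.
  under eq_bigr do rewrite rmapE mulr_sumr.
  rewrite exchange_big /=; apply: big1 => k _.
  transitivity ((\sum_i w j i * x k i) * d 0 k); last by rewrite (hx1 k j) mul0r.
  by rewrite mulr_suml; apply: eq_bigr => i _; rewrite mulrA.
pose s := [seq (delta_mx 0 i : 'rV[R^c]_n, mu i) | i <- enum 'I_n].
have hs : teq (tmap g s) [::].
  rewrite /teq tsum_nil subr0; apply/teqv0.
  have -> : tsum (tmap g s) = \sum_i tgen (g (delta_mx 0 i), mu i).
    by rewrite /tsum /tmap /s -map_comp big_map big_enum.
  have hg : forall i, g (delta_mx 0 i) = \sum_j (w j i : R^c) *: (delta_mx 0 j : 'rV[R^c]_m).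
    move=> i; apply/rowP => j; rewrite rmapE (row_sumE (fun j => (w j i : R^c))).
    under eq_bigr do rewrite deltaE.
    by rewrite (bigD1 i) //= eqxx mulr1 big1 ?addr0 // => i' /negPf ->; rewrite mulr0.
  under eq_bigr do rewrite hg.
  have H := tBIL (index_enum 'I_m) (index_enum 'I_n)
     (fun j => (delta_mx 0 j : 'rV[R^c]_m)) (fun j i => w j i) mu.
  apply: teqv_trans (teqv_sym H) _.
  apply: (@teqv_trans _ _ _ _ (\sum_(j < m) tgen ((delta_mx 0 j : 'rV[R^c]_m), 0 : M))).
    by apply: teqv_sum => j _; apply: teqvE; rewrite hmu.
  apply: (@teqv_trans _ _ _ _ (\sum_(j < m) 0)); last by rewrite big1 //; apply: teqv_refl.
  by apply: teqv_sum => j _; apply: tgen0r.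
have [t ht] := (hflat _ _ _ f g exact_gf s).1 hs.
pose x0 : 'rV[R^c]_K * M := (0, 0).
exists (size t), (fun l i => (f (nth x0 t l).1) 0 i), (fun l => (nth x0 t l).2).
split.
  move=> l j; have := exact_gf (f (nth x0 t l).1); case=> _ /(_ (ex_intro _ _ erefl)).
  by move=> /(congr1 (fun z : 'rV[R^c]_m => z 0 j)); rewrite rmapE mxE.
move=> i.
pose ev := tev (fun p : 'rV[R^c]_n * M => (p.1 0 i : R) *: p.2).
have hev : forall u, trel u -> ev u = 0.
  apply: tev_trel.
  - by move=> y y' m0; rewrite mxE scalerDl.
  - by move=> y m0 m0'; rewrite scalerDr.
  - by move=> r y m0; rewrite /= scalecE scalerA.
have := hev _ ht; rewrite /ev tevB !tev_tsum => /eqP; rewrite subr_eq0 => /eqP.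
have es : \sum_(p <- s) (p.1 0 i : R) *: p.2 = mu i.
  rewrite /s big_map big_enum /=.
  under eq_bigr do rewrite deltaE.
  rewrite (bigD1 i) //= eqxx scale1r big1 ?addr0 // => i' hi'.
  by rewrite eq_sym (negPf hi') scale0r.
rewrite es => <-.
rewrite /tmap big_map (big_nth x0) big_mkord; by [].
Qed.
End FlatEq.

Section Vanish.
Variables (R : pzRingType) (Z : lmodType R^c) (M : lmodType R).

Definition Phi (u : {freeg (Z * M) / int}) (p : M) : Z :=
  tev (fun q : Z * M => if q.2 == p then q.1 else 0) u.

Definition vanJ (u : {freeg (Z * M) / int}) :=
  exists C : seq (Z * seq (M * R)),
    (forall c, c \in C -> \sum_(q <- c.2) q.2 *: q.1 = 0) /\
    (forall p, Phi u p = \sum_(c <- C) \sum_(q <- c.2 | q.1 == p) (q.2 : R^c) *: c.1).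

Lemma vanish u : trel u -> vanJ u.
Proof.
elim=> [|z1 z2 _ [C1 [hC1 e1]] _ [C2 [hC2 e2]]|x x' m|x m m'|r x m].
- exists [::]; split=> // p; by rewrite /Phi tev0 big_nil.
- exists (C1 ++ [seq (- c.1, c.2) | c <- C2]); split.
    move=> c; rewrite mem_cat => /orP [/hC1 //|/mapP [c' /hC2 h ->]] //.
  move=> p; rewrite /Phi tevB -/(Phi z1 p) -/(Phi z2 p) e1 e2 big_cat big_map /=.
  by rewrite -sumrN; congr (_ + _); apply: eq_bigr => c _;
    rewrite -sumrN; apply: eq_bigr => q _; rewrite scalerN.
- exists [::]; split=> // p; rewrite big_nil /Phi !tevB !tevU /=.
  by case: (m == p); rewrite ?subrr // addrAC addrK subrr.
- exists [:: (x, [:: (m + m', 1); (m, -1); (m', -1)])]; split.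
    move=> c; rewrite inE => /eqP -> /=.
    by rewrite !big_cons big_nil /= scale1r !scaleN1r addr0 -opprD subrr.
  move=> p; rewrite big_cons big_nil addr0 /Phi !tevB !tevU /= !big_cons big_nil /=.
  case: (m + m' == p); case: (m == p); case: (m' == p);
    rewrite ?scale1r ?scaleN1r ?oppr0 ?addr0 ?add0r ?subr0 ?sub0r ?addrA //.
- exists [:: (x, [:: (m, r); (r *: m, -1)])]; split.
    move=> c; rewrite inE => /eqP -> /=.
    by rewrite !big_cons big_nil /= scaleN1r addr0 subrr.
  move=> p; rewrite big_cons big_nil addr0 /Phi !tevB !tevU /= !big_cons big_nil /=.
  case: (m == p); case: (r *: m == p);
    rewrite ?scaleN1r ?oppr0 ?addr0 ?add0r ?subr0 ?sub0r //.
Qed.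
End Vanish.

Lemma uniq_pick (T : eqType) (P : seq T) (x0 y : T) : uniq P -> y \in P ->
  exists i0 : 'I_(size P), nth x0 P i0 = y /\
    forall (V : nmodType) (G : 'I_(size P) -> V),
      \sum_(i < size P | nth x0 P i == y) G i = G i0.
Proof.
move=> Pu yP; have hi : (index y P < size P)%N by rewrite index_mem.
exists (Ordinal hi); split; first exact: nth_index.
move=> V G; apply: big_pred1 => i /=.
by rewrite -{1}(nth_index x0 yP) nth_uniq.
Qed.

Section EqFlat.
Variables (R : pzRingType) (M : lmodType R).

Lemma eqcrit_flat : eqcrit M -> flat M.
Proof.
move=> hE X Y Z f g hex s; split; last first.
  case=> t ht; have h1 := teq_tmap g ht.
  rewrite /teq tsum_nil subr0; apply: (trel_teqv (teqv_sym h1)).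
  apply/teqv0; rewrite /tsum /tmap -map_comp big_map.
  apply: (@teqv_trans _ _ _ _ (\sum_(p <- t) 0)); last first.
    by rewrite big1 //; apply: teqv_refl.
  apply: teqv_sum => p _ /=.
  have -> : g (f p.1) = 0 by apply/(hex (f p.1)); exists p.1.
  exact: tgen0l.
move=> hs.
have hu : trel (tsum (tmap g s)) by move: hs; rewrite /teq tsum_nil subr0.
have [C [hC eC]] := vanish hu.
pose P := undup ([seq p.2 | p <- s] ++ flatten [seq [seq q.1 | q <- c.2] | c <- C]).
have Pu : uniq P := undup_uniq _.
pose N := size P.
pose pt (i : 'I_N) : M := nth 0 P i.
pose c0 : Z * seq (M * R) := (0, [::]).
pose a (k : 'I_(size C)) (i : 'I_N) : R := \sum_(q <- (nth c0 C k).2 | q.1 == pt i) q.2.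
have hP : forall mm, mm \in P -> exists i0 : 'I_N, pt i0 = mm /\
    forall (V : nmodType) (G : 'I_N -> V), \sum_(i | pt i == mm) G i = G i0.
  by move=> mm mP; apply: uniq_pick.
have ha : forall k, \sum_i a k i *: pt i = 0.
  move=> k; apply: (@eq_trans _ _ (\sum_(q <- (nth c0 C k).2) q.2 *: q.1)); last first.
    by apply: hC; apply: mem_nth.
  under eq_bigr do rewrite scaler_suml big_mkcond.
  rewrite exchange_big /=; apply: eq_big_seq => q qin.
  have qP : q.1 \in P.
    rewrite mem_undup mem_cat; apply/orP; right.
    apply/flatten_mapP; exists (nth c0 C k); first exact: mem_nth.
    by apply/mapP; exists q.
  have [i0 [e0 hs0]] := hP _ qP.
  rewrite -big_mkcond /=.
  under eq_bigl do rewrite eq_sym.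
  by rewrite (hs0 _ (fun i => q.2 *: pt i)) e0.
have [K [x [nu [hx hnu]]]] := hE _ _ a pt ha.
pose xt (k : 'I_K) (mm : M) : R := \sum_(i < N | pt i == mm) x k i.
have hxt : forall mm, mm \in P -> mm = \sum_k xt k mm *: nu k.
  move=> mm mP; have [i0 [e0 hs0]] := hP _ mP.
  under eq_bigr do rewrite scaler_suml.
  rewrite exchange_big /= (hs0 _ (fun i => \sum_k x k i *: nu k)).
  by rewrite -hnu e0.
pose y' (k : 'I_K) : Y := \sum_(p <- s) (xt k p.2 : R^c) *: p.1.
have ePhi : forall mm, Phi (tsum (tmap g s)) mm
    = \sum_(p <- s) (if p.2 == mm then g p.1 else 0).
  by move=> mm; rewrite /Phi tev_tsum /tmap big_map.
have hgy : forall k, g (y' k) = 0.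
  move=> k; rewrite /y' linear_sum /=.
  under eq_bigr do rewrite linearZ /= /xt scaler_suml big_mkcond /=.
  rewrite exchange_big /=.
  transitivity (\sum_(i < N) (x k i : R^c) *: Phi (tsum (tmap g s)) (pt i)).
    apply: eq_bigr => i _; rewrite ePhi scaler_sumr; apply: eq_bigr => p _.
    by rewrite [p.2 == _]eq_sym; case: (pt i == p.2); rewrite ?scaler0.
  under eq_bigr do rewrite eC (big_nth c0) big_mkord scaler_sumr.
  rewrite exchange_big /=; apply: big1 => k' _.
  transitivity (\sum_(i < N) ((a k' i * x k i : R) : R^c) *: (nth c0 C k').1).
    apply: eq_bigr => i _; rewrite /a -scaler_suml scalerA; congr (_ *: _).
  by rewrite -scaler_suml (hx k k') scale0r.
have [F hF] : exists F : 'I_K -> X, forall k, f (F k) = y' k.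
  apply: (@fin_all_exists _ _ (fun k x0 => f x0 = y' k)) => k; apply/(hex (y' k)); exact: hgy.
exists [seq (F k, nu k) | k <- enum 'I_K].
rewrite /teq; apply: teqv_sym.
have -> : tsum (tmap f [seq (F k, nu k) | k <- enum 'I_K])
    = \sum_k tgen (y' k, nu k).
  by rewrite /tsum /tmap -map_comp big_map big_enum /=; apply: eq_bigr => k _; rewrite hF.
apply: (@teqv_trans _ _ _ _ (\sum_(p <- s) tgen (p.1, \sum_k xt k p.2 *: nu k))).
  apply: teqvE; rewrite /tsum; apply: eq_big_seq => p pin.
  rewrite -hxt; first by case: p pin.
  by rewrite mem_undup mem_cat; apply/orP; left; apply/mapP; exists p.
exact: (tBIL s (index_enum 'I_K) (fun p => p.1) (fun p k => xt k p.2) nu).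
Qed.
End EqFlat.

Section EP.
Variables (R : pzRingType) (M : lmodType R).

Lemma eqcrit_P : eqcrit M -> forall G : fpfunctor R, covdefect_zero G -> ev_zero G M.
Proof.
move=> hE [A B hA hB al] hcov g /=.
have [n [v [hspan [m [w [hrel hcomp]]]]]] := hA.
pose mu i := g (v i).
have hmu : forall j, \sum_i w j i *: mu i = 0.
  move=> j; transitivity (g (\sum_i w j i *: v i)); last by rewrite hrel linear0.
  by rewrite linear_sum; apply: eq_bigr => i _; rewrite linearZ.
have [K [x [nu [hx hnu]]]] := hE _ _ w mu hmu.
have hF : forall k, exists F : {linear A -> R^o},
    (forall c, F (\sum_i c i *: v i) = \sum_i c i *: (x k i : R^o)) /\
    (forall i, F (v i) = x k i).
  move=> k; apply: (fp_ext hspan hcomp) => j; exact: (hx k j).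
have [F hF'] := fin_all_exists hF.
have hH : forall k, exists h : {linear B -> R^o}, forall a, F k a = h (al a).
  by move=> k; apply: (hcov (F k)).
have [H hH'] := fin_all_exists hH.
pose hf (b : B) : M := \sum_k (H k b : R) *: nu k.
have hfL : linear hf.
  move=> r b b'; rewrite /hf scaler_sumr -big_split /=; apply: eq_bigr => k _.
  by rewrite linearD linearZ /= scalerDl scalerA.
exists (mklin hfL) => a; rewrite mklinE /hf.
have [c ->] := hspan a.
rewrite linear_sum /=.
have hnu' : forall i, g (v i) = \sum_k x k i *: nu k := hnu.
under eq_bigr do rewrite linearZ /= hnu' scaler_sumr.
rewrite exchange_big /=; apply: eq_bigr => k _.
rewrite -(hH' k) (hF' k).1 scaler_suml; apply: eq_bigr => i _.
by rewrite scalerA.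
Qed.

Lemma P_eqcrit : right_coherent R ->
  (forall G : fpfunctor R, covdefect_zero G -> ev_zero G M) -> eqcrit M.
Proof.
move=> hR hP n m w mu hmu.
pose W := fun j => (\row_i w j i : 'rV[R]_n).
have [K [x [hx1 hx2]]] := fgker_all hR w.
pose v i := cls W (delta_mx 0 i).
have hspan : forall a : qtype W, exists c : 'I_n -> R, a = \sum_i c i *: v i.
  by move=> a; exists (fun i => sval a 0 i); apply: quot_span.
have hcomp : forall c : 'I_n -> R, \sum_i c i *: v i = 0 ->
    exists d : 'I_m -> R, forall i, c i = \sum_j d j * (fun j i => W j 0 i) j i.
  exact: quot_comp.
have wE : forall j i, W j 0 i = w j i by move=> j i; rewrite mxE.
pose u i : 'rV[R]_K := \row_k x k i.
have [al [_ hal]] : exists F : {linear qtype W -> 'rV[R]_K},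
    (forall c, F (\sum_i c i *: v i) = \sum_i c i *: u i) /\ (forall i, F (v i) = u i).
  apply: (fp_ext hspan hcomp) => j; apply/rowP => k; rewrite summxE mxE.
  rewrite -[RHS](hx1 k j); apply: eq_bigr => i _; by rewrite !mxE ?wE.
have [g [_ hg]] : exists F : {linear qtype W -> M},
    (forall c, F (\sum_i c i *: v i) = \sum_i c i *: mu i) /\ (forall i, F (v i) = mu i).
  apply: (fp_ext hspan hcomp) => j; rewrite -[RHS](hmu j).
  by apply: eq_bigr => i _; rewrite wE.
pose G := @FPFunctor R [the lmodType R of qtype W] [the lmodType R of 'rV[R]_K]
  (fin_pres_quot W) (fin_pres_row R K) al.
have hcov : covdefect_zero G.
  move=> phi /=.
  have hphi : rker w (fun i => phi (v i)).
    move=> j; transitivity (phi (\sum_i W j 0 i *: v i)); last by rewrite quot_rel linear0.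
    by rewrite linear_sum; apply: eq_bigr => i _; rewrite linearZ /= wE.
  have [d hd] := hx2 _ hphi.
  pose hf (z : 'rV[R]_K) : R^o := \sum_k (z 0 k : R) * d k.
  have hfL : linear hf.
    move=> r z z'; rewrite /hf scaler_sumr -big_split /=; apply: eq_bigr => k _.
    by rewrite !mxE mulrDl; congr (_ + _); rewrite /GRing.scale /= mulrA.
  exists (mklin hfL) => a; have [c ->] := hspan a.
  rewrite !linear_sum; apply: eq_bigr => i _; rewrite !linearZ /=; congr (_ *: _).
  rewrite mklinE /hf hal hd; apply: eq_bigr => k _; by rewrite mxE.
have [h hh] := hP G hcov g.
exists K, x, (fun k => h (delta_mx 0 k)); split=> // i.
rewrite -hg hh /= hal [u i]row_sum_delta linear_sum; apply: eq_bigr => k _.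
by rewrite linearZ mxE.
Qed.
End EP.

Lemma split_l m n (i : 'I_m) : split (lshift n i) = inl i.
Proof. exact: (unsplitK (inl i)). Qed.
Lemma split_r m n (i : 'I_n) : split (rshift m i) = inr i.
Proof. exact: (unsplitK (inr i)). Qed.

Section TExtra.
Variables (R : pzRingType) (X : lmodType R^c) (M : lmodType R).
Lemma tgenNl (x : X) (m : M) : teqv (tgen (- x, m)) (- tgen (x, m)).
Proof.
have h := tgenDl (- x) x m; rewrite addNr in h.
have h2 := teqv_trans (teqv_sym h) (tgen0l X m).
have := teqvB h2 (teqv_refl (tgen (x, m))).
by rewrite addrK sub0r.
Qed.
Lemma tgenBl (x x' : X) (m : M) :
  teqv (tgen (x - x', m)) (tgen (x, m) - tgen (x', m)).
Proof.
apply: teqv_trans (tgenDl _ _ _) _; apply: teqvD (teqv_refl _) _; exact: tgenNl.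
Qed.
End TExtra.

Section Faith.
Variables (R : pzRingType) (M : lmodType R).

Lemma faithful_of : right_coherent R -> flat M ->
  (forall G : fpfunctor R, ev_zero G M -> covdefect_zero G) -> fp_faithful M.
Proof.
move=> hR hflat hH N N' _ hN' f g hfg n0.
have [p [v' [hspan' [q [W' [hrel' hcomp']]]]]] := hN'.
pose y := f n0 - g n0.
have [c hc] := hspan' y.
pose wk (l : 'I_p) (i : 'I_(1 + q)) : R :=
  match split i with inl _ => (c l : R) | inr j => - (W' j l : R) end.
have [K [xk [hx1 hx2]]] := fgker_all hR wk.
pose r (k : 'I_K) : R := xk k (lshift q ord0).
have kerE : forall z : 'I_(1 + q) -> R, rker wk z ->
    (z (lshift q ord0) : R^c) *: y = 0.
  move=> z hz; rewrite hc scaler_sumr.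
  transitivity (\sum_l \sum_j ((W' j l : R) * (z (rshift 1 j) : R) : R^c) *: v' l).
    apply: eq_bigr => l _; rewrite scalerA -scaler_suml; congr (_ *: _).
    have := hz l; rewrite big_split_ord /= big_ord1 /wk split_l.
    under eq_bigr do rewrite split_r mulNr.
    rewrite sumrN => /eqP; rewrite subr_eq0 => /eqP <-.
    by [].
  rewrite exchange_big /=; apply: big1 => j _.
  transitivity (\sum_l (z (rshift 1 j) : R^c) *: ((W' j l : R^c) *: v' l)).
    by apply: eq_bigr => l _; rewrite scalerA.
  by rewrite -scaler_sumr hrel' scaler0.
have hA1 : forall k, (r k : R^c) *: y = 0 by move=> k; apply: kerE; apply: hx1.
have hA2 : forall rr : R, (rr : R^c) *: y = 0 -> exists e : 'I_K -> R,
    rr = \sum_k r k * e k.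
  move=> rr hrr.
  have : \sum_l ((c l : R) * rr : R^c) *: v' l = 0.
    transitivity ((rr : R^c) *: y); last exact: hrr.
    by rewrite hc scaler_sumr; apply: eq_bigr => l _; rewrite scalerA.
  move=> /hcomp' [d hd].
  have hz : rker wk (fun i => match split i with inl _ => rr | inr j => (d j : R) end).
    move=> l; rewrite big_split_ord /= big_ord1 /wk split_l.
    under eq_bigr do rewrite split_r mulNr.
    by rewrite sumrN hd subrr.
  have [e he] := hx2 _ hz; exists e.
  by have := he (lshift q ord0); rewrite split_l.
pose alf (a : 'rV[R]_1) : 'rV[R]_K := \row_k (a 0 0 * r k).
have alfL : linear alf.
  by move=> a z z'; apply/rowP => k; rewrite !mxE mulrDl mulrA.
pose G := @FPFunctor R [the lmodType R of 'rV[R]_1] [the lmodType R of 'rV[R]_K]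
  (fin_pres_row R 1) (fin_pres_row R K) (mklin alfL).
have hev : ev_zero G M.
  move=> gg /=; pose mm := gg (delta_mx 0 0).
  pose f' := rmap (fun (_ : 'I_1) k => r k).
  pose g'f (z : 'rV[R^c]_1) : N' := (z 0 0 : R^c) *: y.
  have g'L : linear g'f.
    by move=> a z z'; rewrite /g'f !mxE scalerDl scalerA.
  pose g' := mklin g'L.
  have hex : forall z, g' z = 0 <-> exists e, f' e = z.
    move=> z; split.
      rewrite mklinE /g'f => /hA2 [e he]; exists (\row_k (e k : R^c)).
      apply/rowP => i; rewrite ord1 rmapE he; apply: eq_bigr => k _; by rewrite mxE.
    move=> [e <-]; rewrite mklinE /g'f rmapE scaler_suml; apply: big1 => k _.
    transitivity ((e 0 k : R^c) *: ((r k : R^c) *: y)); first by rewrite scalerA.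
    by rewrite hA1 scaler0.
  pose s := [:: (delta_mx 0 0 : 'rV[R^c]_1, mm)].
  have hs : teq (tmap g' s) [::].
    rewrite /teq tsum_nil subr0 /tmap /= tsum_cons tsum_nil addr0.
    have -> : g' (delta_mx 0 0) = y by rewrite mklinE /g'f mxE /= scale1r.
    have h0 := hfg [:: (n0, mm)]; rewrite /teq /tmap /= !tsum_cons !tsum_nil !addr0 in h0.
    exact: (trel_teqv (tgenBl _ _ _) h0).
  have [t ht] := (hflat _ _ _ f' g' hex s).1 hs.
  pose ev := tev (fun p : 'rV[R^c]_1 * M => (p.1 0 0 : R) *: p.2).
  have hevt : forall u, trel u -> ev u = 0.
    apply: tev_trel.
    - by move=> z z' m0; rewrite mxE scalerDl.
    - by move=> z m0 m0'; rewrite scalerDr.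
    - by move=> a z m0; rewrite /= scalecE scalerA.
  have := hevt _ ht; rewrite /ev tevB !tev_tsum => /eqP; rewrite subr_eq0 => /eqP.
  rewrite /s big_cons big_nil addr0 /= mxE /= scale1r /tmap big_map /= => hm.
  pose nu (k : 'I_K) : M := \sum_(pp <- t) (pp.1 0 k : R) *: pp.2.
  have hm' : mm = \sum_k r k *: nu k.
    rewrite -hm; under eq_bigr do rewrite rmapE scaler_suml.
    rewrite exchange_big /=; apply: eq_bigr => k _; rewrite /nu scaler_sumr.
    by apply: eq_bigr => pp _; rewrite scalerA.
  pose hf (z : 'rV[R]_K) : M := \sum_k (z 0 k : R) *: nu k.
  have hfL : linear hf.
    move=> a z z'; rewrite /hf scaler_sumr -big_split /=; apply: eq_bigr => k _.
    by rewrite !mxE scalerDl scalerA.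
  exists (mklin hfL) => a /=.
  have ea : a = a 0 0 *: delta_mx 0 0.
    by apply/rowP => i; rewrite ord1 !mxE /= mulr1.
  rewrite mklinE /hf mklinE /alf {1}ea linearZ /= -/mm hm' scaler_sumr.
  by apply: eq_bigr => k _; rewrite mxE scalerA.
have hcov := hH G hev.
have phiL : linear (fun a : 'rV[R]_1 => (a 0 0 : R^o)).
  by move=> a z z'; rewrite !mxE.
have [h hh] := hcov (mklin phiL).
have e1 := hh (delta_mx 0 0); rewrite mklinE mxE /= in e1.
have e2 : (mklin alfL : 'rV[R]_1 -> 'rV[R]_K) (delta_mx 0 0)
    = \sum_k r k *: delta_mx 0 k.
  apply/rowP => k; rewrite mklinE /alf mxE mxE /= mul1r summxE.
  under eq_bigr do rewrite mxE deltaE eq_sym.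
  by rewrite sum_nat_deltar.
rewrite e2 linear_sum in e1.
apply/eqP; rewrite -subr_eq0; apply/eqP; rewrite -/y.
have e3 : (1 : R^c) = ((\sum_k h (r k *: delta_mx 0 k) : R^o) : R^c) by exact: e1.
rewrite -[y]scale1r e3 scaler_suml; apply: big1 => k _.
rewrite linearZ /=.
transitivity ((h (delta_mx 0 k) : R^c) *: ((r k : R^c) *: y)); first by rewrite scalerA.
by rewrite hA1 scaler0.
Qed.
End Faith.

Section Back.
Variables (R : pzRingType) (M : lmodType R).
Variables (A B : lmodType R) (al : {linear A -> B}).
Variables (n m : nat) (v : 'I_n -> A) (w : 'I_m -> 'I_n -> R).
Hypothesis hspanA : forall a : A, exists c : 'I_n -> R, a = \sum_i c i *: v i.
Hypothesis hrelA : forall j, \sum_i w j i *: v i = 0.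
Hypothesis hcompA : forall c : 'I_n -> R, \sum_i c i *: v i = 0 ->
  exists d : 'I_m -> R, forall i, c i = \sum_j d j * w j i.
Variables (nB mB : nat) (u : 'I_nB -> B) (wB : 'I_mB -> 'I_nB -> R).
Hypothesis hspanB : forall b : B, exists c : 'I_nB -> R, b = \sum_i c i *: u i.
Hypothesis hrelB : forall j, \sum_i wB j i *: u i = 0.
Hypothesis hcompB : forall c : 'I_nB -> R, \sum_i c i *: u i = 0 ->
  exists d : 'I_mB -> R, forall i, c i = \sum_j d j * wB j i.
Variable acoef : 'I_n -> 'I_nB -> R.
Hypothesis hacoef : forall i, al (v i) = \sum_b acoef i b *: u b.
Variables (p : nat) (x : 'I_p -> 'I_n -> R).
Hypothesis hx1 : forall k, rker w (x k).
Hypothesis hx2 : forall c, rker w c -> exists d : 'I_p -> R, forall i, c i = \sum_k x k i * d k.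
Variables (pB : nat) (yv : 'I_pB -> 'I_nB -> R).
Hypothesis hy1 : forall l, rker wB (yv l).
Hypothesis hy2 : forall c, rker wB c -> exists d : 'I_pB -> R, forall i, c i = \sum_l yv l i * d l.

Definition alstar (psi : 'I_nB -> R) (i : 'I_n) : R := \sum_b acoef i b * psi b.

Lemma alstar_ker psi : rker wB psi -> rker w (alstar psi).
Proof.
move=> hpsi j.
have : \sum_b (\sum_i w j i * acoef i b) *: u b = 0.
  transitivity (al (\sum_i w j i *: v i)); last by rewrite hrelA linear0.
  rewrite linear_sum; under [RHS]eq_bigr do rewrite linearZ /= hacoef scaler_sumr.
  rewrite exchange_big /=; apply: eq_bigr => b _; rewrite scaler_suml.
  by apply: eq_bigr => i _; rewrite scalerA.
move=> /hcompB [d hd].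
rewrite /alstar; under eq_bigr do rewrite mulr_sumr.
rewrite exchange_big /=.
transitivity (\sum_b (\sum_i w j i * acoef i b) * psi b).
  by apply: eq_bigr => b _; rewrite mulr_suml; apply: eq_bigr => i _; rewrite mulrA.
under eq_bigr do rewrite hd mulr_suml.
rewrite exchange_big /=; apply: big1 => j' _.
transitivity (d j' * \sum_b wB j' b * psi b); last by rewrite hpsi mulr0.
by rewrite mulr_sumr; apply: eq_bigr => b _; rewrite mulrA.
Qed.

Definition wr (i : 'I_n) (t : 'I_(p + pB)) : R :=
  match split t with inl k => x k i | inr l => - alstar (yv l) i end.

Variables (Q : nat) (z : 'I_Q -> 'I_(p + pB) -> R).
Hypothesis hz1 : forall q, rker wr (z q).
Hypothesis hz2 : forall c, rker wr c -> exists d : 'I_Q -> R, forall i, c i = \sum_q z q i * d q.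

Definition Wq (q : 'I_Q) : 'rV[R^c]_p := \row_k (z q (lshift pB k) : R^c).

Lemma inRel (cv : 'I_p -> R) (e : 'I_pB -> R) :
  (forall i, \sum_k x k i * cv k = \sum_l alstar (yv l) i * e l) ->
  cls Wq (\row_k (cv k : R^c)) = 0.
Proof.
move=> he.
pose zv (t : 'I_(p + pB)) : R := match split t with inl k => cv k | inr l => e l end.
have hzv : rker wr zv.
  move=> i; rewrite big_split_ord /= /wr /zv.
  under eq_bigr do rewrite split_l.
  under [X in _ + X]eq_bigr do rewrite split_r mulNr.
  by rewrite sumrN he subrr.
have [d hd] := hz2 hzv.
apply/cls_eq0; exists (fun q => (d q : R^c)); rewrite subr0.
apply/rowP => k; rewrite mxE summxE.
have := hd (lshift pB k); rewrite /zv split_l => ->.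
by apply: eq_bigr => q _; rewrite !mxE.
Qed.

Hypothesis hE : eqcrit M.
Hypothesis hev : forall g : {linear A -> M}, exists h : {linear B -> M},
  forall a, g a = h (al a).

Definition eps (k : 'I_p) : qtype Wq := cls Wq (delta_mx 0 k).

Lemma sum_eps (cv : 'I_p -> R) :
  \sum_k (cv k : R^c) *: eps k = cls Wq (\row_k (cv k : R^c)).
Proof.
rewrite [in RHS](row_sum_delta (\row_k (cv k : R^c))) cls_sum.
by apply: eq_bigr => k _; rewrite clsZ mxE.
Qed.

Lemma key2 (mu : 'I_p -> M) : trel (\sum_k tgen (eps k, mu k)).
Proof.
have [gmu [_ hgmu]] : exists F : {linear A -> M},
    (forall c, F (\sum_i c i *: v i) = \sum_i c i *: (\sum_k x k i *: mu k)) /\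
    (forall i, F (v i) = \sum_k x k i *: mu k).
  apply: (fp_ext hspanA hcompA) => j.
  under eq_bigr do rewrite scaler_sumr.
  rewrite exchange_big /=; apply: big1 => k _.
  transitivity ((\sum_i w j i * x k i) *: mu k); last by rewrite hx1 scale0r.
  by rewrite scaler_suml; apply: eq_bigr => i _; rewrite scalerA.
have [hB' hh] := hev gmu.
pose eta b := hB' (u b).
have heta : forall j, \sum_b wB j b *: eta b = 0.
  move=> j; transitivity (hB' (\sum_b wB j b *: u b)); last by rewrite hrelB linear0.
  by rewrite linear_sum; apply: eq_bigr => b _; rewrite linearZ.
have [K1 [zz [nu1 [hzz hnu1]]]] := @hE _ _ wB eta heta.
have [et het] := fin_all_exists (fun t => hy2 (hzz t)).
have [ct hct] := fin_all_exists (fun t => hx2 (alstar_ker (hzz t))).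
have hrel_ct : forall t, cls Wq (\row_k (ct t k : R^c)) = 0.
  move=> t; apply: (@inRel _ (et t)) => i; rewrite -hct /alstar.
  under eq_bigr do rewrite het mulr_sumr.
  rewrite exchange_big /=; apply: eq_bigr => l _; rewrite mulr_suml.
  by apply: eq_bigr => b _; rewrite mulrA.
have hmid : forall i, \sum_k x k i *: mu k = \sum_t alstar (zz t) i *: nu1 t.
  move=> i; rewrite -hgmu hh hacoef linear_sum.
  under eq_bigr do rewrite linearZ /= -/(eta _) hnu1 scaler_sumr.
  rewrite exchange_big /=; apply: eq_bigr => t _; rewrite /alstar scaler_suml.
  by apply: eq_bigr => b _; rewrite scalerA.
pose mu' k := mu k - \sum_t ct t k *: nu1 t.
have hmu' : forall i, \sum_k (fun i k => x k i) i k *: mu' k = 0.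
  move=> i; rewrite /mu'; under eq_bigr do rewrite scalerBr.
  rewrite sumrB hmid; apply/eqP; rewrite subr_eq0; apply/eqP.
  under [RHS]eq_bigr do rewrite scaler_sumr.
  rewrite exchange_big /=; apply: eq_bigr => t _; rewrite hct scaler_suml.
  by apply: eq_bigr => k _; rewrite scalerA.
have [K2 [ze [lam [hze hlam]]]] := @hE _ _ (fun i k => x k i) mu' hmu'.
have hrel_ze : forall s, cls Wq (\row_k (ze s k : R^c)) = 0.
  move=> s; apply: (@inRel _ (fun _ => 0)) => i.
  by rewrite (hze s i) big1 // => l _; rewrite mulr0.
have hmuE : forall k, mu k = \sum_t ct t k *: nu1 t + \sum_s ze s k *: lam s.
  by move=> k; rewrite -hlam /mu' addrC subrK.
apply/teqv0.
apply: (@teqv_trans _ _ _ _ (\sum_k (tgen (eps k, \sum_t ct t k *: nu1 t)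
    + tgen (eps k, \sum_s ze s k *: lam s)))).
  by apply: teqv_sum => k _; rewrite hmuE; apply: tgenDr.
rewrite big_split /=.
apply: (@teqv_trans _ _ _ _ (0 + 0)); last by rewrite addr0; apply: teqv_refl.
apply: teqvD.
  apply: teqv_trans (tBIL _ _ _ _ _) _.
  apply: (@teqv_trans _ _ _ _ (\sum_(t < K1) 0)); last by rewrite big1 //; apply: teqv_refl.
  apply: teqv_sum => t _; rewrite sum_eps hrel_ct; exact: tgen0l.
apply: teqv_trans (tBIL _ _ _ _ _) _.
apply: (@teqv_trans _ _ _ _ (\sum_(s < K2) 0)); last by rewrite big1 //; apply: teqv_refl.
apply: teqv_sum => s _; rewrite sum_eps hrel_ze; exact: tgen0l.
Qed.
End Back.

Lemma trel_sum (R : pzRingType) (X : lmodType R^c) (M : lmodType R) (I : Type)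
  (r : seq I) (P : pred I) (F : I -> {freeg (X * M) / int}) :
  (forall i, P i -> trel (F i)) -> trel (\sum_(i <- r | P i) F i).
Proof.
move=> h; elim: r => [|i r IH]; first by rewrite big_nil; apply: trel0.
by rewrite big_cons; case: ifP => // Pi; apply: trelD => //; apply: h.
Qed.

Lemma cov_of (R : pzRingType) (M : lmodType R) : right_coherent R -> flat M ->
  fp_faithful M -> forall G : fpfunctor R, ev_zero G M -> covdefect_zero G.
Proof.
move=> hR hflat hfaith [A B hA hB al] hev phi /=.
rewrite /ev_zero /= in hev.
have hE := flat_eqcrit hR hflat.
have [n [v [hspanA [m [w [hrelA hcompA]]]]]] := hA.
have [nB [u [hspanB [mB [wB [hrelB hcompB]]]]]] := hB.
have [acoef hacoef] := fin_all_exists (fun i => hspanB (al (v i))).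
have hacoef' : forall i, al (v i) = \sum_b acoef i b *: u b by [].
have [p [x [hx1 hx2]]] := fgker_all hR w.
have [pB [yv [hy1 hy2]]] := fgker_all hR wB.
have [Q [z [hz1 hz2]]] := fgker_all hR (wr acoef x yv).
have hphi : rker w (fun i => phi (v i)).
  move=> j; transitivity (phi (\sum_i w j i *: v i)); last by rewrite hrelA linear0.
  by rewrite linear_sum; apply: eq_bigr => i _; rewrite linearZ.
have [c0 hc0] := hx2 _ hphi.
pose Wz := Wq z.
pose xi : qtype Wz := cls Wz (\row_k (c0 k : R^c)).
have Fl : linear (fun zz : 'rV[R^c]_1 => (zz 0 0 : R^c) *: xi).
  by move=> a zz zz'; rewrite !mxE scalerDl scalerA.
have Zl : linear (fun zz : 'rV[R^c]_1 => (0 : qtype Wz)).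
  by move=> a zz zz'; rewrite scaler0 addr0.
have hxi : forall mm : M, trel (tgen (xi, mm)).
  move=> mm.
  have e1 : teqv (tgen (xi, mm)) (\sum_k tgen (eps z k, c0 k *: mm)).
    rewrite /xi -sum_eps; apply: teqv_trans (tgen_suml _ _ _) _.
    by apply: teqv_sum => k _; apply: tgen_bal.
  apply: (trel_teqv e1).
  exact: (key2 hspanA hrelA hcompA hrelB hcompB hacoef' hx1 hx2 hy2 hz2 hE hev).
have hyp : forall s : seq ('rV[R^c]_1 * M), teq (tmap (mklin Fl) s) (tmap (mklin Zl) s).
  move=> s; rewrite /teq /tsum /tmap !big_map -sumrB.
  apply: trel_sum => pp _ /=; rewrite !mklinE.
  apply: teqv_trans (tgen_bal _ _ _) _.
  apply: (@teqv_trans _ _ _ _ 0); first by apply/teqv0; apply: hxi.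
  exact: teqv_sym (tgen0l _ _).
have := hfaith _ _ (fin_pres_row _ 1) (fin_pres_quot Wz) (mklin Fl) (mklin Zl) hyp
  (delta_mx 0 0).
rewrite !mklinE mxE /= scale1r /xi => /cls_eq0 [e he].
have hc0' : forall k, c0 k = \sum_q z q (lshift pB k) * e q.
  move=> k; have := congr1 (fun r : 'rV[R^c]_p => r 0 k) he.
  rewrite subr0 !mxE summxE => ->; apply: eq_bigr => q _; by rewrite !mxE.
pose psi (b : 'I_nB) : R := \sum_l yv l b * \sum_q z q (rshift p l) * e q.
have hpsi : rker wB psi.
  move=> j; rewrite /psi; under eq_bigr do rewrite mulr_sumr.
  rewrite exchange_big /=; apply: big1 => l _.
  transitivity ((\sum_b wB j b * yv l b) * \sum_q z q (rshift p l) * e q).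
    by rewrite mulr_suml; apply: eq_bigr => b _; rewrite mulrA.
  by rewrite (hy1 l j) mul0r.
have hphiE : forall i, phi (v i) = alstar acoef psi i.
  move=> i; rewrite hc0.
  under eq_bigr do rewrite hc0' mulr_sumr.
  rewrite exchange_big /=.
  transitivity (\sum_q (\sum_l alstar acoef (yv l) i * z q (rshift p l)) * e q).
    apply: eq_bigr => q _.
    have := hz1 q i; rewrite big_split_ord /= /wr.
    under eq_bigr do rewrite split_l.
    under [X in _ + X]eq_bigr do rewrite split_r mulNr.
    rewrite sumrN => /eqP; rewrite subr_eq0 => /eqP <-.
    by rewrite mulr_suml; apply: eq_bigr => k _; rewrite mulrA.
  rewrite /alstar /psi.
  transitivity (\sum_l (\sum_b acoef i b * yv l b) * (\sum_q z q (rshift p l) * e q)).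
    under eq_bigr do rewrite mulr_suml.
    rewrite exchange_big /=; apply: eq_bigr => l _.
    by rewrite mulr_sumr; apply: eq_bigr => q _; rewrite mulrA.
  transitivity (\sum_l \sum_b acoef i b * (yv l b * (\sum_q z q (rshift p l) * e q))).
    by apply: eq_bigr => l _; rewrite mulr_suml; apply: eq_bigr => b _; rewrite mulrA.
  by rewrite exchange_big /=; apply: eq_bigr => b _; rewrite mulr_sumr.
have [h [_ hh]] : exists F : {linear B -> R^o},
    (forall c, F (\sum_i c i *: u i) = \sum_i c i *: (psi i : R^o)) /\
    (forall i, F (u i) = psi i).
  by apply: (fp_ext hspanB hcompB) => j; apply: hpsi.
exists h => a; have [c ->] := hspanA a.
rewrite !linear_sum; apply: eq_bigr => i _; rewrite !linearZ /=; congr (_ *: _).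
rewrite hphiE hacoef' linear_sum /alstar; apply: eq_bigr => b _.
by rewrite linearZ /= hh.
Qed.

Local Close Scope ring_scope.

Theorem mainTheorem12 (R : pzRingType) (hR : right_coherent R) (M : lmodType R) :
  ((forall G : fpfunctor R, covdefect_zero G -> ev_zero G M) <-> flat M) /\
  ((forall G : fpfunctor R, covdefect_zero G <-> ev_zero G M)
     <-> fp_faithfully_flat M).
Proof.
have part1 : (forall G : fpfunctor R, covdefect_zero G -> ev_zero G M) <-> flat M.
  split=> [hP|hf]; first exact: eqcrit_flat (P_eqcrit hR hP).
  exact: eqcrit_P (flat_eqcrit hR hf).
split=> //; split.
  move=> H; have hf : flat M by apply/part1 => G /H.
  by split=> //; apply: faithful_of hR hf _ => G /H.
move=> [hf hfa] G; split; first by move: G; apply/part1.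
exact: cov_of hR hf hfa G.
Qed.
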